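(* Let $G=(V,E)$ be a finite, simple, connected graph with $|V|\geq 3$ and let $d\in\mathrm{Der}(\mathcal{A}(G))$ with $d(e_i)=\sum_{k\in V}d_{ik}e_k$. If $d_{ij}\neq 0$ for some $i,j\in V$ with $i\neq j$, then $i\sim_t j$.
   Context: Throughout, $\mathbb{K}$ is a field of characteristic $0$. A graph $G=(V,E)$ has vertex set $V=\{1,\dots,n\}$ and is assumed finite, simple (no loops, no multiple edges) and connected. $\mathcal{N}(i)$ denotes the set of neighbors of vertex $i$, and $(a_{ij})$ is the adjacency matrix ($a_{ij}=1$ if $i,j$ are adjacent, $0$ otherwise). The evolution algebra $\mathcal{A}(G)$ is the $\mathbb{K}$-algebra with basis $\{e_i: i\in V\}$ and product $e_i\cdot e_i=\sum_{k\in V}a_{ik}e_k=\sum_{k\in\mathcal{N}(i)}e_k$ and $e_i\cdot e_j=0$ for $i\neq j$. A derivation of $\mathcal{A}(G)$ is a linear map $d:\mathcal{A}(G)\to\mathcal{A}(G)$ with $d(u\cdot v)=d(u)\cdot v+u\cdot d(v)$ for all $u,v$; $\mathrm{Der}(\mathcal{A}(G))$ is the space of derivations, and for $d$ in it we write $d(e_i)=\sum_{k\in V}d_{ik}e_k$. Two vertices $i,j$ are twins, written $i\sim_t j$, if $\mathcal{N}(i)=\mathcal{N}(j)$. *)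

(* Defs.v *)
From HB Require Import structures.
From mathcomp Require Import all_boot all_order all_algebra.
Set Implicit Arguments. Unset Strict Implicit. Unset Printing Implicit Defensive.
Import GRing.Theory.
Local Open Scope ring_scope.

Definition simple_graph (n : nat) (adj : rel 'I_n) : Prop :=
  symmetric adj /\ irreflexive adj.

Definition connected_graph (n : nat) (adj : rel 'I_n) : Prop :=
  forall i j : 'I_n, connect adj i j.

(* Elements of the evolution algebra A(G) are coordinate row vectors
   w.r.t. the natural basis (e_i); e_i is delta_mx 0 i. *)
Definition basis_vec (K : fieldType) (n : nat) (i : 'I_n) : 'rV[K]_n :=
  delta_mx 0 i.

(* Evolution product: e_i . e_i = sum_k a_ik e_k, e_i . e_j = 0 (i<>j),
   extended bilinearly. *)
Definition evmul (K : fieldType) (n : nat) (adj : rel 'I_n)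
    (u v : 'rV[K]_n) : 'rV[K]_n :=
  \row_k \sum_(i < n) u 0 i * v 0 i * (adj i k)%:R.

(* A linear map d is represented by its matrix D in the basis (e_i), with
   d(e_i) = sum_k D i k e_k, i.e. d(u) = u *m D (row-vector convention). *)
Definition is_derivation (K : fieldType) (n : nat) (adj : rel 'I_n)
    (D : 'M[K]_n) : Prop :=
  forall u v : 'rV[K]_n,
    evmul adj u v *m D = evmul adj (u *m D) v + evmul adj u (v *m D).

Definition twins (n : nat) (adj : rel 'I_n) (i j : 'I_n) : Prop :=
  forall k : 'I_n, adj i k = adj j k.

(* Main.v *)
Require Import Defs.
From HB Require Import structures.
From mathcomp Require Import all_boot all_order all_algebra.
Local Open Scope ring_scope.
Import GRing.Theory.

Lemma sum_delta (K : fieldType) (n : nat) (j : 'I_n) (F : 'I_n -> K) :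
  \sum_(l < n) (delta_mx 0 j : 'rV[K]_n) 0 l * F l = F j.
Proof.
rewrite (bigD1 j) //= big1 ?addr0; first by rewrite mxE !eqxx mul1r.
by move=> l; rewrite mxE; case: (l =P j) => // _ _; rewrite andbF mul0r.
Qed.

Theorem lemma3p4 (K : fieldType) (Kchar0 : [pchar K] =i pred0)
  (n : nat) (adj : rel 'I_n)
  (Hsimple : simple_graph adj) (Hconn : connected_graph adj)
  (Hn : (3 <= n)%N)
  (D : 'M[K]_n) (HD : is_derivation adj D)
  (i j : 'I_n) (Hij : i != j) (Hdij : D i j != 0) :
  twins adj i j.
Proof.
have Hk : forall k, D i j * (adj j k)%:R + D j i * (adj i k)%:R = 0.
  move=> k.
  have := congr1 (fun M : 'rV[K]_n => M 0 k) (HD (basis_vec K i) (basis_vec K j)).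
  rewrite /evmul /basis_vec !mxE.
  have -> : \sum_(l < n) (\row_k0 \sum_(i0 < n) (delta_mx 0 i : 'rV[K]_n) 0 i0
       * (delta_mx 0 j : 'rV[K]_n) 0 i0 * (adj i0 k0)%:R) 0 l * D l k = 0.
    apply: big1 => l _; rewrite mxE big1 ?mul0r // => m _.
    rewrite !mxE; case: (eqVneq i m) => [<-|nm]; last by rewrite mul0r !mul0r.
    by rewrite (negbTE Hij) mulr0 mul0r.
  under eq_bigr => l _ do rewrite -rowE mxE (mulrC (D i l)) -mulrA.
  rewrite (@sum_delta K n j (fun l => D i l * (adj l k)%:R)).
  under [X in _ + X]eq_bigr => l _ do rewrite -rowE -mulrA.
  by rewrite (@sum_delta K n i (fun l => row j D 0 l * (adj l k)%:R)) mxE => ->.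
have [x Hx] : exists x, adj j x.
  have /connectP [p Hp Hl] := Hconn j i.
  case: p Hp Hl => [|x p] /=; first by move=> _ E; rewrite E eqxx in Hij.
  by case/andP=> a _ _; exists x.
have Hdji : D j i = - D i j.
  have := Hk x; rewrite Hx; case: (adj i x) => /=.
    by rewrite !mulr1 addrC => /eqP; rewrite addr_eq0 => /eqP.
  by rewrite mulr0 addr0 mulr1 => E; rewrite E eqxx in Hdij.
move=> k; have := Hk k; rewrite Hdji.
case: (adj i k); case: (adj j k) => //= ; rewrite ?mulr1 ?mulr0 ?add0r ?addr0.
  by move/eqP; rewrite oppr_eq0 (negbTE Hdij).
by move/eqP; rewrite (negbTE Hdij).
Qed.
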